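(* Let $L_1,L_2\ge 1$ be integers, $S=\{0,1,\dots,L_1\}\times\{0,1,\dots,L_2\}$, $N=\{-1,0,1\}^2$, and let $R$ be a discrete-time Markov chain on $S$ with transition probabilities $p(n,n+u)$, $u\in N$, where $p(n,n+u)=0$ whenever $n+u\notin S$. Let $F:S\to[0,\infty)$ and define $F^0\equiv 0$ and, for $t\ge 0$, $F^{t+1}(n)=F(n)+\sum_{u\in N}p(n,n+u)F^{t}(n+u)$. Let $e_1=(1,0)$, $e_2=(0,1)$, and for $s\in\{1,2\}$ and $n\in S$ with $n+e_s\in S$ set $D^t_s(n)=F^t(n+e_s)-F^t(n)$. Assume that there are real constants $c_{s,n,v,u}$ ($s,v\in\{1,2\}$, $n\in S$ with $n+e_s\in S$, $u\in N$), with $c_{s,n,v,u}=0$ whenever $n+u+e_v\notin S$ or $n+u\notin S$, such that for all $t\ge 0$, all $s\in\{1,2\}$ and all $n$ with $n+e_s\in S$, $$D^{t+1}_s(n)=F(n+e_s)-F(n)+\sum_{v=1}^{2}\sum_{u\in N}c_{s,n,v,u}\,D^t_v(n+u).$$ Suppose that functions $A_s,B_s$ (defined on $\{n\in S: n+e_s\in S\}$, $s=1,2$) take values in $[0,\infty)$ and satisfy, for all $s\in\{1,2\}$ and all $n$ with $n+e_s\in S$, $$F(n+e_s)-F(n)+\sum_{v=1}^{2}\sum_{u\in N}\max\{-c_{s,n,v,u}A_v(n+u),\;c_{s,n,v,u}B_v(n+u)\}\le B_s(n),$$ $$F(n)-F(n+e_s)+\sum_{v=1}^{2}\sum_{u\in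 N}\max\{-c_{s,n,v,u}B_v(n+u),\;c_{s,n,v,u}A_v(n+u)\}\le A_s(n),$$ where terms with $c_{s,n,v,u}=0$ are taken to be $0$. Then for all $t\ge 0$, $s\in\{1,2\}$ and $n$ with $n+e_s\in S$, $$-A_s(n)\le D^t_s(n)\le B_s(n).$$
   Context: $F^t(n)$ is the expected cumulative reward over $t$ steps of the chain started in $n$ with one-step reward $F$; the differences $D^t_s(n)$ are called bias terms. *)

(* Defs.v *)
From Stdlib Require Import Reals Lra Lia ZArith List.
Import ListNotations.
Open Scope R_scope.

Definition padd (a b : Z * Z) : Z * Z := ((fst a + fst b)%Z, (snd a + snd b)%Z).

Definition inS (L1 L2 : Z) (n : Z * Z) : Prop :=
  (0 <= fst n <= L1)%Z /\ (0 <= snd n <= L2)%Z.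

Definition Nset : list (Z * Z) :=
  [(-1,-1); (-1,0); (-1,1); (0,-1); (0,0); (0,1); (1,-1); (1,0); (1,1)]%Z.

Definition sumL {A : Type} (l : list A) (f : A -> R) : R :=
  fold_right (fun x acc => f x + acc) 0 l.

Definition e (s : nat) : Z * Z := if Nat.eqb s 1 then (1%Z, 0%Z) else (0%Z, 1%Z).

Definition Sidx : list nat := [1%nat; 2%nat].

Fixpoint Ft (p : Z * Z -> Z * Z -> R) (F : Z * Z -> R) (t : nat) (n : Z * Z) : R :=
  match t with
  | O => 0
  | S t' => F n + sumL Nset (fun u => p n (padd n u) * Ft p F t' (padd n u))
  end.

Definition D (p : Z * Z -> Z * Z -> R) (F : Z * Z -> R) (t : nat) (s : nat) (n : Z * Z) : R :=
  Ft p F t (padd n (e s)) - Ft p F t n.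

(* Main.v *)
Require Import Defs.
From Stdlib Require Import Reals ZArith List Lra Psatz Classical.
Open Scope R_scope.

Lemma sumL_le {X : Type} (l : list X) (f g : X -> R) :
  (forall x, In x l -> f x <= g x) -> sumL l f <= sumL l g.
Proof.
  induction l as [|a l IH]; simpl; intros H; [lra|].
  assert (f a <= g a) by (apply H; auto).
  assert (sumL l f <= sumL l g) by (apply IH; intros; apply H; auto). lra.
Qed.

Lemma sumL_opp {X : Type} (l : list X) (f : X -> R) :
  sumL l (fun x => - f x) = - sumL l f.
Proof. induction l; simpl; [lra|rewrite IHl; lra]. Qed.

Lemma key1 c d a b : -a <= d <= b -> c * d <= Rmax (- c * a) (c * b).
Proof.
  intros H. destruct (Rle_dec 0 c).
  - eapply Rle_trans; [|apply Rmax_r]. nra.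
  - eapply Rle_trans; [|apply Rmax_l]. nra.
Qed.

Lemma key2 c d a b : -a <= d <= b -> - (c * d) <= Rmax (- c * b) (c * a).
Proof.
  intros H. destruct (Rle_dec 0 c).
  - eapply Rle_trans; [|apply Rmax_r]. nra.
  - eapply Rle_trans; [|apply Rmax_l]. nra.
Qed.

Theorem mainTheorem1
  (L1 L2 : Z) (HL1 : (1 <= L1)%Z) (HL2 : (1 <= L2)%Z)
  (p : Z * Z -> Z * Z -> R)
  (Hp_nonneg : forall n u, inS L1 L2 n -> In u Nset -> 0 <= p n (padd n u))
  (Hp_sum : forall n, inS L1 L2 n -> sumL Nset (fun u => p n (padd n u)) = 1)
  (Hp_out : forall n u, inS L1 L2 n -> In u Nset -> ~ inS L1 L2 (padd n u) ->
              p n (padd n u) = 0)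
  (F : Z * Z -> R) (HF : forall n, inS L1 L2 n -> 0 <= F n)
  (c : nat -> Z * Z -> nat -> Z * Z -> R)
  (Hc_zero : forall s n v u, In s Sidx -> inS L1 L2 n -> inS L1 L2 (padd n (e s)) ->
              In v Sidx -> In u Nset ->
              (~ inS L1 L2 (padd (padd n u) (e v)) \/ ~ inS L1 L2 (padd n u)) ->
              c s n v u = 0)
  (Hrec : forall t s n, In s Sidx -> inS L1 L2 n -> inS L1 L2 (padd n (e s)) ->
              D p F (S t) s n =
              F (padd n (e s)) - F n +
              sumL Sidx (fun v => sumL Nset (fun u => c s n v u * D p F t v (padd n u))))
  (A B : nat -> Z * Z -> R)
  (HA : forall s n, In s Sidx -> inS L1 L2 n -> inS L1 L2 (padd n (e s)) -> 0 <= A s n)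
  (HB : forall s n, In s Sidx -> inS L1 L2 n -> inS L1 L2 (padd n (e s)) -> 0 <= B s n)
  (HBineq : forall s n, In s Sidx -> inS L1 L2 n -> inS L1 L2 (padd n (e s)) ->
              F (padd n (e s)) - F n +
              sumL Sidx (fun v => sumL Nset (fun u =>
                Rmax (- c s n v u * A v (padd n u)) (c s n v u * B v (padd n u))))
              <= B s n)
  (HAineq : forall s n, In s Sidx -> inS L1 L2 n -> inS L1 L2 (padd n (e s)) ->
              F n - F (padd n (e s)) +
              sumL Sidx (fun v => sumL Nset (fun u =>
                Rmax (- c s n v u * B v (padd n u)) (c s n v u * A v (padd n u))))
              <= A s n) :
  forall t s n, In s Sidx -> inS L1 L2 n -> inS L1 L2 (padd n (e s)) ->
    - A s n <= D p F t s n <= B s n.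
Proof.
  intros t. induction t as [|t IH]; intros s n Hs Hn Hns.
  - unfold D; simpl. pose proof (HA s n Hs Hn Hns). pose proof (HB s n Hs Hn Hns). lra.
  - rewrite Hrec by assumption.
    assert (Hle : sumL Sidx (fun v => sumL Nset (fun u => c s n v u * D p F t v (padd n u)))
       <= sumL Sidx (fun v => sumL Nset (fun u =>
                Rmax (- c s n v u * A v (padd n u)) (c s n v u * B v (padd n u))))).
    { apply sumL_le; intros v Hv; apply sumL_le; intros u Hu.
      destruct (Req_dec (c s n v u) 0) as [E|E].
      - rewrite E. rewrite Rmult_0_l, Ropp_0, !Rmult_0_l, Rmax_left; lra.
      - apply key1. apply IH; auto.
        + destruct (Classical_Prop.classic (inS L1 L2 (padd n u))); auto.
          exfalso; apply E; eapply Hc_zero; eauto.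
        + destruct (Classical_Prop.classic (inS L1 L2 (padd (padd n u) (e v)))); auto.
          exfalso; apply E; eapply Hc_zero; eauto. }
    assert (Hge : - sumL Sidx (fun v => sumL Nset (fun u => c s n v u * D p F t v (padd n u)))
       <= sumL Sidx (fun v => sumL Nset (fun u =>
                Rmax (- c s n v u * B v (padd n u)) (c s n v u * A v (padd n u))))).
    { rewrite <- sumL_opp. apply sumL_le; intros v Hv. rewrite <- sumL_opp.
      apply sumL_le; intros u Hu.
      destruct (Req_dec (c s n v u) 0) as [E|E].
      - rewrite E. rewrite Rmult_0_l, Ropp_0, !Rmult_0_l, Rmax_left; lra.
      - apply key2. apply IH; auto.
        + destruct (Classical_Prop.classic (inS L1 L2 (padd n u))); auto.
          exfalso; apply E; eapply Hc_zero; eauto.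
        + destruct (Classical_Prop.classic (inS L1 L2 (padd (padd n u) (e v)))); auto.
          exfalso; apply E; eapply Hc_zero; eauto. }
    pose proof (HBineq s n Hs Hn Hns). pose proof (HAineq s n Hs Hn Hns). lra.
Qed.
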